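(* Let $n$ be a positive integer and $k$ an integer with $0\le k\le n-1$. Then $$\binom{2k}{k}\sum_{i=0}^{k}\left(\binom{n}{k+i+1}+4\binom{n}{k+i+2}\right)\binom{k+i}{i}\binom{k}{i}\equiv 0\pmod n.$$
   Context: Binomial coefficients $\binom{a}{b}$ with $b>a\ge 0$ are zero. *)

(* Defs.v *)
From mathcomp Require Import all_boot.

(* Main.v *)
Require Import Defs.
From mathcomp Require Import all_boot all_order all_algebra.
From mathcomp Require Import ring lra zify.
Import Order.TTheory GRing.Theory Num.Theory.

Local Open Scope ring_scope.
Lemma binR (n m r : nat) : (m + r = n)%N ->
  ('C(n,m)%:R : rat) = (n`!)%:R / ((m`!)%:R * (r`!)%:R).
Proof.
move=> <-; have := bin_fact (leq_addr r m); rewrite addKn => H.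
rewrite -H [in RHS]natrM -(natrM _ m`! r`!) mulfK // pnatr_eq0 muln_eq0 negb_or -!lt0n !fact_gt0 //=.
Qed.

Lemma Lsmall (k i : nat) : (i < k)%N ->
  (k + i.+2 %| 'C(k.*2, k) * ('C(k + i.+1, i.+1) * 'C(k, i.+1) + 4 * ('C(k + i, i) * 'C(k, i))))%N.
Proof.
move=> lik; have [t hk] : exists t, k = (i.+1 + t)%N by exists (k - i.+1)%N; lia.
pose c := 'C(k.*2, k); pose X := 'C(k + i.+1, i.+1); pose Ck1 := 'C(k, i.+1).
pose Z := 'C(k+i, i); pose Ck := 'C(k, i); pose A0 := 'C(k.*2, k + i.+1).
pose A1 := 'C(k.*2, k + i); pose Y := 'C(k + i, i.+1); pose Am := 'C(k.*2, (k + i.+1).+1).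
have E : ((k + i.+2) * (A0*X^2 + 2*A1*X^2 + 4*A1*Y^2) =
   c * (X*Ck1 + 4*(Z*Ck)) + (k+i.+2) * (6*A1*X*Y + Am*X^2))%N.
  apply/eqP; rewrite -(eqr_nat rat); apply/eqP.
  have hAm : (Am%:R : rat) = t%:R * A0%:R / (k + i.+2)%:R.
    have := mul_bin_left k.*2 (k + i.+1); rewrite -/Am -/A0.
    have -> : (k.*2 - (k + i.+1) = t)%N by lia.
    move=> H; rewrite -natrM -H natrM -addnS mulrC mulKf // pnatr_eq0; lia.
  have fk : (k`! = k * (i+t)`!)%N by rewrite hk addSn factS.
  set I : rat := i%:R; set T : rat := t%:R.
  set fi : rat := (i`!)%:R; set ft : rat := (t`!)%:R; set fki : rat := ((k+i)`!)%:R.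
  set fk1 : rat := ((i+t)`!)%:R; set f2k : rat := ((k.*2)`!)%:R.
  have kR : (k%:R : rat) = I + T + 1 by rewrite hk /I /T -addn1 !natrD; ring.
  have eC : (c%:R : rat) = f2k / ((k%:R * fk1) * (k%:R * fk1)).
    by rewrite /c (@binR _ _ k) ?addnn // fk natrM.
  have eX : (X%:R : rat) = (k + i.+1)%:R * fki / ((I+1) * fi * (k%:R * fk1)).
    rewrite /X (@binR _ _ k); last (by rewrite addnC); rewrite fk addnS !factS !natrM /fki /fi.
    by rewrite -[i.+1%:R]natr1.
  have eCk1 : (Ck1%:R : rat) = (k%:R * fk1) / ((I+1) * fi * ft).
    by rewrite /Ck1 (@binR _ _ t) ?hk // -hk fk factS !natrM -natr1.
  have eZ : (Z%:R : rat) = fki / (fi * (k%:R * fk1)).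
    by rewrite /Z (@binR _ _ k); last (by rewrite addnC); rewrite fk natrM.
  have eCk : (Ck%:R : rat) = (k%:R * fk1) / (fi * ((T+1) * ft)).
    by rewrite /Ck (@binR _ _ t.+1) ?hk ?addnS // -hk fk factS !natrM -natr1.
  have eA0 : (A0%:R : rat) = f2k / ((k + i.+1)%:R * fki * ft).
    rewrite /A0 (@binR _ _ t); last by rewrite hk; lia.
    by rewrite addnS factS !natrM /fki.
  have eA1 : (A1%:R : rat) = f2k / (fki * ((T+1) * ft)).
    rewrite /A1 (@binR _ _ t.+1); last by rewrite hk; lia.
    by rewrite factS !natrM -natr1.
  have eY : (Y%:R : rat) = fki / ((I+1) * fi * fk1).
    rewrite /Y (@binR _ _ (i+t)%N); last by rewrite hk; lia.
    by rewrite factS !natrM -natr1.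
  rewrite ?(natrD, natrM, natrX) hAm eC eX eCk1 eZ eCk eA0 eA1 eY.
  have e1 : ((k + i.+1)%:R : rat) = I + T + 1 + I + 1 by rewrite natrD kR -[i.+1%:R]natr1 addrA.
  have e2 : ((k + i.+2)%:R : rat) = I + T + 1 + I + 2.
    by rewrite natrD kR -[i.+2%:R]natr1 -[i.+1%:R]natr1 /I; ring.
  have e3 : (i.+2%:R : rat) = I + 2 by rewrite -[i.+2%:R]natr1 -[i.+1%:R]natr1 /I; ring.
  rewrite e1 e2 ?e3 kR.
  have hI0 : 0 <= I by rewrite /I ler0n.
  have n1 : I + 1 != 0 by apply: lt0r_neq0; lra.
  have hI : 0 <= I by rewrite /I ler0n.
  have hT : 0 <= T by rewrite /T ler0n.
  have n2 : T + 1 != 0 by apply: lt0r_neq0; lra.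
  have n3 : I + T + 1 != 0 by apply: lt0r_neq0; lra.
  have n4 : I + T + 1 + I + 1 != 0 by apply: lt0r_neq0; lra.
  have n5 : I + T + 1 + I + 2 != 0 by apply: lt0r_neq0; lra.
  have n6 : fi != 0 by rewrite pnatr_eq0 -lt0n fact_gt0.
  have n7 : ft != 0 by rewrite pnatr_eq0 -lt0n fact_gt0.
  have n8 : fki != 0 by rewrite pnatr_eq0 -lt0n fact_gt0.
  have n9 : fk1 != 0 by rewrite pnatr_eq0 -lt0n fact_gt0.

  field.
  by rewrite ?n1 ?n2 ?n3 ?n4 ?n5 ?n6 ?n7 ?n8 ?n9.
have -> : (c * (X * Ck1 + 4 * (Z * Ck)) = (k + i.+2) * (A0*X^2 + 2*A1*X^2 + 4*A1*Y^2)
   - (k+i.+2) * (6*A1*X*Y + Am*X^2))%N by rewrite E addnK.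
by rewrite dvdn_sub // dvdn_mulr.
Qed.

Lemma catdiv (k : nat) : (k.+1 %| 'C(k.*2, k))%N.
Proof.
have H := mul_bin_left k.*2 k.
have e : (k.*2 - k = k)%N by lia.
rewrite e in H.
have -> : 'C(k.*2, k) = (k.+1 * 'C(k.*2, k) - k.+1 * 'C(k.*2, k.+1))%N.
  by rewrite H mulSn addnK.
by rewrite dvdn_sub // dvdn_mulr.
Qed.

Lemma Lk (k i : nat) :
  (k + i.+2 %| 'C(k.*2, k) * ('C(k + i.+1, i.+1) * 'C(k, i.+1) + 4 * ('C(k + i, i) * 'C(k, i))))%N.
Proof.
case: (ltnP i k) => [lik|kli]; first exact: Lsmall.
rewrite (bin_small (n:=k) (m:=i.+1)) ?muln0 ?add0n; last by lia.
case: (ltnP k i) => [kli'|ik].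
  by rewrite (bin_small (n:=k) (m:=i)) ?muln0 ?dvdn0.
have -> : i = k by lia.
rewrite binn muln1 addnn.
case/dvdnP: (catdiv k) => q hq.
rewrite hq (_ : k + k.+2 = 2 * k.+1)%N; last by lia.
apply/dvdnP; exists (2 * q * (q * k.+1))%N; lia.
Qed.

Lemma bridge (n p A : nat) : (p.+1 %| A)%N -> (n %| A * 'C(n, p.+1))%N.
Proof.
case/dvdnP=> q ->; rewrite -mulnA -mul_bin_diag mulnCA; exact: dvdn_mulr.
Qed.

Local Close Scope ring_scope.

Theorem mainTheorem9 (n k : nat) (hn : 0 < n) (hk : k <= n - 1) :
  n %| 'C(k.*2, k) *
        \sum_(0 <= i < k.+1)
          ('C(n, k + i + 1) + 4 * 'C(n, k + i + 2)) * 'C(k + i, i) * 'C(k, i).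
Proof.
have claim : forall m, (n %| 'C(k.*2, k) * (\sum_(0 <= i < m)
          ('C(n, k + i + 1) + 4 * 'C(n, k + i + 2)) * 'C(k + i, i) * 'C(k, i)
          + 'C(n, k + m + 1) * ('C(k + m, m) * 'C(k, m))))%N.
  elim=> [|m IH].
    rewrite big_geq // add0n addn0 !bin0 muln1 addn1.
    rewrite muln1; exact: bridge (catdiv k).
  rewrite big_nat_recr //=.
  set S := \sum_(0 <= i < m) _.
  have -> : ('C(k.*2, k) * (S + ('C(n, k + m + 1) + 4 * 'C(n, k + m + 2)) * 'C(k + m, m) * 'C(k, m) +
     'C(n, k + m.+1 + 1) * ('C(k + m.+1, m.+1) * 'C(k, m.+1))) =
     'C(k.*2, k) * (S + 'C(n, k + m + 1) * ('C(k + m, m) * 'C(k, m))) +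
     'C(k.*2, k) * ('C(k + m.+1, m.+1) * 'C(k, m.+1) + 4 * ('C(k + m, m) * 'C(k, m))) * 'C(n, (k + m.+1).+1))%N.
    rewrite (_ : k + m + 2 = (k + m.+1).+1)%N; last by lia.
    rewrite (_ : k + m.+1 + 1 = (k + m.+1).+1)%N; last by lia.
    ring.
  apply: dvdn_add IH _; apply: bridge; have := Lk k m; by rewrite -addnS.
have := claim k.+1.
by rewrite (bin_small (n:=k) (m:=k.+1)) // !muln0 addn0.
Qed.
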